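(* Let $\{\mathcal G,(\Gamma_0,\Gamma_1),(\widetilde\Gamma_0,\widetilde\Gamma_1)\}$ be a triple for the adjoint pair $\{S,\widetilde S\}$ satisfying (G), (D), (M), with $\rho(A_0)\neq\emptyset$ (equivalently $\rho(\widetilde A_0)\neq\emptyset$), $\gamma$-fields $\gamma,\widetilde\gamma$ and Weyl functions $M,\widetilde M$. Let $B_1,B_2,\widetilde B_1,\widetilde B_2$ be linear operators in $\mathcal G$, and let $\lambda\in\rho(A_0)$, $\mu\in\rho(\widetilde A_0)$. (i) If $\lambda\notin\sigma_p(A_{B_1B_2})$ and $f\in\mathfrak H$ satisfies $\widetilde\gamma(\overline\lambda)^*f\in\operatorname{dom}B_2$ and $B_2\widetilde\gamma(\overline\lambda)^*f\in\operatorname{ran}(I-B_2M(\lambda)B_1)$, then $f\in\operatorname{ran}(A_{B_1B_2}-\lambda)$ and $(A_{B_1B_2}-\lambda)^{-1}f=(A_0-\lambda)^{-1}f+\gamma(\lambda)B_1(I-B_2M(\lambda)B_1)^{-1}B_2\widetilde\gamma(\overline\lambda)^*f$. If these two conditions hold for all $f\in\mathfrak H$, then $A_{B_1B_2}-\lambda$ is a bijection of $\operatorname{dom}A_{B_1B_2}$ onto $\mathfrak H$. (ii) If $\mu\notin\sigma_p(\widetilde A_{\widetilde B_1\widetilde B_2})$ and $g\in\mathfrak H$ satisfies $\gamma(\overline\mu)^*g\in\operatorname{dom}\widetilde B_2$ and $\widetilde B_2\gamma(\overline\mu)^*g\in\operatorname{ran}(I-\widetilde B_2\widetilde M(\mu)\widetilde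 B_1)$, then $g\in\operatorname{ran}(\widetilde A_{\widetilde B_1\widetilde B_2}-\mu)$ and $(\widetilde A_{\widetilde B_1\widetilde B_2}-\mu)^{-1}g=(\widetilde A_0-\mu)^{-1}g+\widetilde\gamma(\mu)\widetilde B_1(I-\widetilde B_2\widetilde M(\mu)\widetilde B_1)^{-1}\widetilde B_2\gamma(\overline\mu)^*g$. If these two conditions hold for all $g\in\mathfrak H$, then $\widetilde A_{\widetilde B_1\widetilde B_2}-\mu$ is a bijection of $\operatorname{dom}\widetilde A_{\widetilde B_1\widetilde B_2}$ onto $\mathfrak H$.
   Context: Let $\mathfrak H$ be a separable Hilbert space. An adjoint pair $\{S,\widetilde S\}$ consists of densely defined closed operators $S,\widetilde S$ in $\mathfrak H$ with $(Sf,g)=(f,\widetilde Sg)$ for all $f\in\operatorname{dom}S$, $g\in\operatorname{dom}\widetilde S$. Fix operators $T\subset S^*$ and $\widetilde T\subset\widetilde S^*$ which are cores, i.e. $\overline T=S^*$ and $\overline{\widetilde T}=\widetilde S^*$. A triple $\{\mathcal G,(\Gamma_0,\Gamma_1),(\widetilde\Gamma_0,\widetilde\Gamma_1)\}$ for $\{S,\widetilde S\}$ consists of a Hilbert space $\mathcal G$ and linear maps $\Gamma_0,\Gamma_1:\operatorname{dom}T\to\mathcal G$, $\widetilde\Gamma_0,\widetilde\Gamma_1:\operatorname{dom}\widetilde T\to\mathcal G$. Put $A_0:=T\upharpoonright\ker\Gamma_0$ and $\widetilde A_0:=\widetilde T\upharpoonright\ker\widetilde\Gamma_0$. Conditions: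 (G) $(Tf,g)_{\mathfrak H}-(f,\widetilde Tg)_{\mathfrak H}=(\Gamma_1f,\widetilde\Gamma_0g)_{\mathcal G}-(\Gamma_0f,\widetilde\Gamma_1g)_{\mathcal G}$ for all $f\in\operatorname{dom}T$, $g\in\operatorname{dom}\widetilde T$; (D) $\operatorname{ran}\Gamma_0$ and $\operatorname{ran}\widetilde\Gamma_0$ are dense in $\mathcal G$; (M) $A_0^*=\widetilde A_0$ and $\widetilde A_0^*=A_0$. For $\lambda\in\rho(A_0)$ one has $\operatorname{dom}T=\ker\Gamma_0\dotplus\ker(T-\lambda)$, so $\Gamma_0\upharpoonright\ker(T-\lambda)$ is injective; similarly for $\widetilde T$. The $\gamma$-fields are $\gamma(\lambda):=(\Gamma_0\upharpoonright\ker(T-\lambda))^{-1}$, $\widetilde\gamma(\mu):=(\widetilde\Gamma_0\upharpoonright\ker(\widetilde T-\mu))^{-1}$; the Weyl functions are $M(\lambda):=\Gamma_1\gamma(\lambda)$, $\lambda\in\rho(A_0)$, and $\widetilde M(\mu):=\widetilde\Gamma_1\widetilde\gamma(\mu)$, $\mu\in\rho(\widetilde A_0)$. Products of operators have their natural domains, e.g. $\operatorname{dom}(B_1B_2)=\{\varphi\in\operatorname{dom}B_2:B_2\varphi\in\operatorname{dom}B_1\}$, and $(I-B_2M(\lambda)B_1)^{-1}$ denotes the inverse of the (injective) operator $I-B_2M(\lambda)B_1$ defined on its range. Define $A_{B_1B_2}f:=Tf$ on $\operatorname{dom}A_{B_1B_2}:=\{f\in\operatorname{dom}T:\Gamma_1f\in\operatorname{dom}(B_1B_2),\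 B_1B_2\Gamma_1f=\Gamma_0f\}$ and $\widetilde A_{\widetilde B_1\widetilde B_2}g:=\widetilde Tg$ on $\operatorname{dom}\widetilde A_{\widetilde B_1\widetilde B_2}:=\{g\in\operatorname{dom}\widetilde T:\widetilde\Gamma_1g\in\operatorname{dom}(\widetilde B_1\widetilde B_2),\ \widetilde B_1\widetilde B_2\widetilde\Gamma_1g=\widetilde\Gamma_0g\}$. $\sigma_p$ denotes the set of eigenvalues. *)

(* Defs.v *)
From mathcomp Require Import all_boot all_order all_algebra.
From mathcomp Require Import complex.
From mathcomp Require Import classical_sets reals.
Set Implicit Arguments. Unset Strict Implicit. Unset Printing Implicit Defensive.
Import Order.TTheory GRing.Theory Num.Theory.
Local Open Scope ring_scope.
Local Open Scope classical_set_scope.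

Section Hilbert.
Variable R : realType.
Local Notation C := (complex R).
Variable V : lmodType C.
Variable ip : V -> V -> C.

Definition hnorm (x : V) : C := sqrtC (ip x x).

Definition seq_cvg (u : nat -> V) (l : V) : Prop :=
  forall e : C, 0 < e -> exists N, forall n, (N <= n)%N -> hnorm (u n - l) < e.

Definition seq_cauchy (u : nat -> V) : Prop :=
  forall e : C, 0 < e -> exists N, forall m n, (N <= m)%N -> (N <= n)%N ->
    hnorm (u m - u n) < e.

Definition is_hilbert : Prop :=
  [/\ (forall (a : C) (x y z : V), ip (a *: x + y) z = a * ip x z + ip y z),
      (forall x y : V, ip y x = (ip x y)^*),
      (forall x : V, 0 <= ip x x),
      (forall x : V, ip x x = 0 -> x = 0) &
      (forall u : nat -> V, seq_cauchy u -> exists l, seq_cvg u l)].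

Definition dense_in (D : set V) : Prop :=
  forall (x : V) (e : C), 0 < e -> exists2 d, D d & hnorm (x - d) < e.

Definition separable : Prop :=
  exists d : nat -> V, dense_in (range d).

End Hilbert.

(* (Possibly unbounded) linear operators, represented by their graphs.      *)
(* An operator from V to W is a set of pairs; (x, y) \in A means x \in dom A *)
(* and A x = y.  Products, inverses, sums etc. are the usual graph          *)
(* operations; products have their natural domains.                        *)
Section Operators.
Variable K : fieldType.

Definition op (V W : lmodType K) := set (V * W).

Section Defs.
Variables U V W : lmodType K.

Definition is_op (A : op V W) : Prop :=
  [/\ A (0, 0),
      (forall (a : K) x y x' y', A (x, y) -> A (x', y') ->
          A (a *: x + x', a *: y + y')) &
      (forall y, A (0, y) -> y = 0)].

Definition dom (A : op V W) : set V := [set x | exists y, A (x, y)].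
Definition ran (A : op V W) : set W := [set y | exists x, A (x, y)].

Definition opinv (A : op V W) : op W V := [set p | A (p.2, p.1)].

(* product B A  (first A, then B), with its natural domain *)
Definition opmul (B : op V W) (A : op U V) : op U W :=
  [set p | exists y, A (p.1, y) /\ B (y, p.2)].

Definition opadd (A B : op V W) : op V W :=
  [set p | exists y z, [/\ A (p.1, y), B (p.1, z) & p.2 = y + z]].

Definition opsub (A B : op V W) : op V W :=
  [set p | exists y z, [/\ A (p.1, y), B (p.1, z) & p.2 = y - z]].

Definition opid : op V V := [set p | p.2 = p.1].

Definition opshift (A : op V V) (l : K) : op V V :=
  [set p | exists y, A (p.1, y) /\ p.2 = y - l *: p.1].

Definition oprestr (A : op V W) (D : set V) : op V W :=
  [set p | A p /\ D p.1].

Definition fgraph (f : V -> W) (D : set V) : op V W :=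
  [set p | D p.1 /\ p.2 = f p.1].

Definition eigker (A : op V V) (l : K) : set V :=
  [set x | A (x, l *: x)].

Definition point_spec (A : op V V) : set K :=
  [set l | exists2 x, x <> 0 & A (x, l *: x)].

Definition linear_on (D : set V) (f : V -> W) : Prop :=
  forall (a : K) x y, D x -> D y -> f (a *: x + y) = a *: f x + f y.

End Defs.
End Operators.
Arguments opid {K V}.

Section HilbertOperators.
Variable R : realType.
Local Notation C := (complex R).
Variables V W : lmodType C.
Variable ipV : V -> V -> C.
Variable ipW : W -> W -> C.

Definition adjoint (A : op V W) : op W V :=
  [set p | forall x y, A (x, y) -> ipW y p.1 = ipV x p.2].

Definition opclosure (A : op V W) : op V W :=
  [set p | exists u : nat -> V * W, (forall n, A (u n)) /\
       seq_cvg ipV (fun n => (u n).1) p.1 /\ seq_cvg ipW (fun n => (u n).2) p.2].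

Definition densely_defined (A : op V W) : Prop := dense_in ipV (dom A).

Definition closed_op (A : op V W) : Prop := opclosure A = A.

End HilbertOperators.

Section Resolvent.
Variable R : realType.
Local Notation C := (complex R).
Variable V : lmodType C.
Variable ip : V -> V -> C.

Definition resolvent (A : op V V) : set C :=
  [set l | [/\ (forall x, opshift A l (x, 0) -> x = 0),
              (forall y, ran (opshift A l) y) &
              (exists c : C, 0 <= c /\ forall x y, opshift A l (x, y) ->
                  hnorm ip x <= c * hnorm ip y)]].

End Resolvent.

Section Triples.
Variable R : realType.
Local Notation C := (complex R).
Variables H G : lmodType C.
Variable ipH : H -> H -> C.
Variable ipG : G -> G -> C.

Definition adjoint_pair (S St : op H H) : Prop :=
  is_op S /\ is_op St /\ densely_defined ipH S /\ densely_defined ipH St /\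
      closed_op ipH ipH S /\ closed_op ipH ipH St /\
      (forall f Sf g Stg, S (f, Sf) -> St (g, Stg) -> ipH Sf g = ipH f Stg).

Definition A0op (T : op H H) (Gam0 : H -> G) : op H H :=
  oprestr T [set f | Gam0 f = 0].

Definition gammaf (T : op H H) (Gam0 : H -> G) (l : C) : op G H :=
  opinv (fgraph Gam0 (eigker T l)).

Definition weylf (T : op H H) (Gam0 Gam1 : H -> G) (l : C) : op G G :=
  opmul (fgraph Gam1 (dom T)) (gammaf T Gam0 l).

Definition ABop (T : op H H) (Gam0 Gam1 : H -> G) (B1 B2 : op G G) : op H H :=
  [set p | T p /\ opmul B1 B2 (Gam1 p.1, Gam0 p.1)].

Definition is_triple (S St T Tt : op H H) (Gam0 Gam1 Gam0t Gam1t : H -> G)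
  : Prop :=
  is_op T /\ is_op Tt /\
      T `<=` adjoint ipH ipH S /\ opclosure ipH ipH T = adjoint ipH ipH S /\
      Tt `<=` adjoint ipH ipH St /\ opclosure ipH ipH Tt = adjoint ipH ipH St /\
      linear_on (dom T) Gam0 /\ linear_on (dom T) Gam1 /\
      linear_on (dom Tt) Gam0t /\ linear_on (dom Tt) Gam1t /\
      (* (G) Green identity *)
      (forall f Tf g Ttg, T (f, Tf) -> Tt (g, Ttg) ->
          ipH Tf g - ipH f Ttg = ipG (Gam1 f) (Gam0t g) - ipG (Gam0 f) (Gam1t g)) /\
      (* (D) density of the ranges of Gam0, Gam0t *)
      dense_in ipG [set Gam0 f | f in dom T] /\
      dense_in ipG [set Gam0t g | g in dom Tt] /\
      (* (M) *)
      adjoint ipH ipH (A0op T Gam0) = A0op Tt Gam0t /\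
      adjoint ipH ipH (A0op Tt Gam0t) = A0op T Gam0.

End Triples.

(* Main.v *)
Require Import Defs.
From mathcomp Require Import all_boot all_order all_algebra.
From mathcomp Require Import complex.
From mathcomp Require Import classical_sets reals.
From mathcomp Require Import boolp.
From mathcomp Require Import ring lra.
Import Order.TTheory GRing.Theory Num.Theory.
Local Open Scope ring_scope.
Local Open Scope classical_set_scope.

Set Implicit Arguments. Unset Strict Implicit.


Section Basics.
Variable R : realType.
Local Notation C := (complex R).
Local Notation Re := complex.Re.
Local Notation Im := complex.Im.

Definition sq (z : C) : R := Re z ^+ 2 + Im z ^+ 2.

Lemma sq_ge0 z : 0 <= sq z.
Proof. by rewrite /sq addr_ge0 ?sqr_ge0. Qed.

Lemma sq_eq0 z : sq z <= 0 -> z = 0.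
Proof.
case: z => a b; rewrite /sq /= => h.
have ha : a ^+ 2 = 0 by apply/eqP; rewrite eq_le sqr_ge0 andbT; nra.
have hb : b ^+ 2 = 0 by apply/eqP; rewrite eq_le sqr_ge0 andbT; nra.
move/eqP: ha; rewrite sqrf_eq0 => /eqP ->.
by move/eqP: hb; rewrite sqrf_eq0 => /eqP ->.
Qed.

Lemma Re_conj (z : C) : Re (z^*) = Re z.
Proof. by case: z. Qed.

Lemma Re_negtz (t : R) (z : C) : Re ((- ((t%:C)%C * z))^* * z) = - (t * sq z).
Proof. case: z => a b; rewrite /sq /=. ring. Qed.

Lemma sq_negtz (t : R) (z : C) : sq (- ((t%:C)%C * z)) = t ^+ 2 * sq z.
Proof. case: z => a b; rewrite /sq /=. ring. Qed.

Lemma le0_eps (x : R) : (forall t, 0 < t -> x <= t) -> x <= 0.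
Proof.
move=> h; rewrite leNgt; apply/negP => hx.
have h2 : (0:R) < 2 by lra.
have := h (x / 2) (divr_gt0 hx h2); lra.
Qed.

End Basics.


Section IP.
Variable R : realType.
Local Notation C := (complex R).
Local Notation Re := complex.Re.
Local Notation Im := complex.Im.
Variable V : lmodType C.
Variable ip : V -> V -> C.
Hypothesis hV : is_hilbert ip.

Lemma ax1 a x y z : ip (a *: x + y) z = a * ip x z + ip y z.
Proof. by destruct hV as [h _ _ _ _]; apply: h. Qed.
Lemma ax2 x y : ip y x = (ip x y)^*.
Proof. by destruct hV as [_ h _ _ _]; apply: h. Qed.
Lemma ax3 x : 0 <= ip x x.
Proof. by destruct hV as [_ _ h _ _]; apply: h. Qed.
Lemma ax4 x : ip x x = 0 -> x = 0.
Proof. by destruct hV as [_ _ _ h _]; apply: h. Qed.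
Lemma ax5 u : seq_cauchy ip u -> exists l, seq_cvg ip u l.
Proof. by destruct hV as [_ _ _ _ h]; apply: h. Qed.

Lemma ipDl x y z : ip (x + y) z = ip x z + ip y z.
Proof. by have := ax1 1 x y z; rewrite scale1r mul1r. Qed.

Lemma ip0l z : ip 0 z = 0.
Proof.
have h := ipDl 0 0 z; rewrite addr0 in h.
by apply: (addrI (ip 0 z)); rewrite addr0 -h.
Qed.

Lemma ipZl a x z : ip (a *: x) z = a * ip x z.
Proof. by rewrite -[a *: x]addr0 ax1 ip0l addr0. Qed.

Lemma ipC x y : ip y x = (ip x y)^*.
Proof. exact: ax2. Qed.

Lemma ipNl x z : ip (- x) z = - ip x z.
Proof. by rewrite -scaleN1r ipZl mulN1r. Qed.

Lemma ipBl x y z : ip (x - y) z = ip x z - ip y z.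
Proof. by rewrite ipDl ipNl. Qed.

Lemma ipDr z x y : ip z (x + y) = ip z x + ip z y.
Proof. by rewrite ipC ipDl rmorphD /= -!ipC. Qed.

Lemma ipZr z a x : ip z (a *: x) = a^* * ip z x.
Proof. by rewrite ipC ipZl rmorphM /= -ipC. Qed.

Lemma ip0r z : ip z 0 = 0.
Proof. by rewrite ipC ip0l rmorph0. Qed.

Lemma ipNr z x : ip z (- x) = - ip z x.
Proof. by rewrite ipC ipNl rmorphN /= -ipC. Qed.

Lemma ipBr z x y : ip z (x - y) = ip z x - ip z y.
Proof. by rewrite ipDr ipNr. Qed.

Definition n2 x := Re (ip x x).

Lemma ip_ge0 x : 0 <= ip x x.
Proof. exact: ax3. Qed.

Lemma ip_real x : ip x x = (n2 x)%:C%C.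
Proof. by rewrite /n2 RRe_real // ger0_real // ip_ge0. Qed.

Lemma n2_ge0 x : 0 <= n2 x.
Proof. by have := ip_ge0 x; rewrite ip_real ler0c. Qed.

Lemma n2_eq0 x : n2 x = 0 -> x = 0.
Proof. by move=> e; apply: ax4; rewrite ip_real e. Qed.

Lemma n2_le0 x : n2 x <= 0 -> x = 0.
Proof. by move=> h; apply: n2_eq0; apply/eqP; rewrite eq_le h n2_ge0. Qed.

Lemma n2_expand a s b :
  n2 (a + s *: b) = n2 a + 2 * Re (s^* * ip a b) + sq s * n2 b.
Proof.
rewrite /n2 ipDl !ipDr !ipZl !ipZr [ip b a]ipC (ip_real a) (ip_real b).
move: (ip a b) (n2 a) (n2 b) => z A B.
case: s => s1 s2; case: z => z1 z2; rewrite /sq /=. ring.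
Qed.

Lemma n2_0 : n2 0 = 0.
Proof. by rewrite /n2 ip0l. Qed.

Lemma n2Z s b : n2 (s *: b) = sq s * n2 b.
Proof. by rewrite -[s *: b]add0r n2_expand ip0l mulr0 n2_0 /= mulr0 !add0r. Qed.

Lemma n2N b : n2 (- b) = n2 b.
Proof. rewrite -scaleN1r n2Z /sq /=; ring. Qed.

Lemma n2D a b : n2 (a + b) = n2 a + 2 * Re (ip a b) + n2 b.
Proof. by rewrite -[b in a + b]scale1r n2_expand /sq /=; case: (ip a b) => z1 z2 /=; ring. Qed.

Lemma n2B a b : n2 (a - b) = n2 a - 2 * Re (ip a b) + n2 b.
Proof. by rewrite -scaleN1r n2_expand /sq /=; case: (ip a b) => z1 z2 /=; ring. Qed.

Lemma Re_ipC a b : Re (ip b a) = Re (ip a b).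
Proof. by rewrite (ipC a b); case: (ip a b). Qed.

Lemma cauchy_schwarz a b : sq (ip a b) <= n2 a * n2 b.
Proof.
have [hb|hb] := eqVneq (n2 b) 0.
  by rewrite (n2_eq0 hb) ip0r n2_0 mulr0 /sq /=; nra.
have Bp : 0 < n2 b by rewrite lt_def hb n2_ge0.
set t := (n2 b)^-1.
have ht : t * n2 b = 1 by rewrite mulVf.
have tp : 0 < t by rewrite invr_gt0.
have H := n2_ge0 (a + (- ((t%:C)%C * ip a b)) *: b).
rewrite n2_expand Re_negtz sq_negtz in H.
have e : n2 b * (n2 a + 2 * - (t * sq (ip a b)) + t ^+ 2 * sq (ip a b) * n2 b)
   = n2 a * n2 b - sq (ip a b) by rewrite /t; field; rewrite hb.
have := mulr_ge0 (ltW Bp) H; rewrite e; lra.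
Qed.

Lemma weighted a b (t : R) : 0 < t ->
  2 * t * Re (ip a b) <= n2 b + t ^+ 2 * n2 a.
Proof.
move=> tp; have := n2_ge0 (b + (- ((t%:C)%C)) *: a).
rewrite n2_expand.
have -> : Re ((- (t%:C)%C)^* * ip b a) = - (t * Re (ip a b)).
  by rewrite -Re_ipC; case: (ip b a) => z1 z2 /=; ring.
have -> : sq (- (t%:C)%C) = t ^+ 2 by rewrite /sq /=; ring.
lra.
Qed.

Lemma hnorm_ge0 x : 0 <= hnorm ip x.
Proof. by rewrite /hnorm sqrtC_ge0 ip_ge0. Qed.

Lemma hnorm_sq x : hnorm ip x ^+ 2 = (n2 x)%:C%C.
Proof. by rewrite /hnorm sqrtCK ip_real. Qed.

Lemma posC (e : C) : 0 < e -> e = ((Re e)%:C)%C /\ 0 < Re e.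
Proof.
move=> he; rewrite ltcE /= in he; case/andP: he => /eqP h1 h2.
case: e h1 h2 => a b /= h1 h2; split=> //.
by rewrite /= in h1 *; first [rewrite h1 | rewrite -h1].
Qed.

Lemma n2_lt_of_hnorm x (e : C) : 0 < e -> hnorm ip x < e -> n2 x < Re e ^+ 2.
Proof.
move=> he hx; have [E Ep] := posC he.
have := hx; rewrite -(ltr_pXn2r (n:=2)) //; last first.
- by rewrite qualifE /= ltW.
- by rewrite qualifE /= hnorm_ge0.
by rewrite hnorm_sq [in X in _ < X -> _]E -rmorphXn ltcR.
Qed.

Lemma hnorm_lt_of_n2 x (e : C) : 0 < e -> n2 x < Re e ^+ 2 -> hnorm ip x < e.
Proof.
move=> he hx; have [E Ep] := posC he.
rewrite -(ltr_pXn2r (n:=2)) //; last first.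
- by rewrite qualifE /= ltW.
- by rewrite qualifE /= hnorm_ge0.
by rewrite hnorm_sq [in X in _ < X]E -rmorphXn ltcR.
Qed.

Lemma cvgP u l : seq_cvg ip u l ->
  forall eps : R, 0 < eps -> exists N, forall n, (N <= n)%N -> n2 (u n - l) < eps.
Proof.
move=> hc eps ep.
have e0 : 0 < ((Num.sqrt eps)%:C)%C :> C by rewrite ltcR sqrtr_gt0.
have [N hN] := hc _ e0; exists N => n hn.
have := n2_lt_of_hnorm e0 (hN n hn); rewrite /= sqr_sqrtr //; exact: ltW.
Qed.

Lemma cauchyP u : (forall eps : R, 0 < eps -> exists N, forall m n,
    (N <= m)%N -> (N <= n)%N -> n2 (u m - u n) < eps) -> seq_cauchy ip u.
Proof.
move=> h e he; have [E Ep] := posC he.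
have [N hN] := h (Re e ^+ 2) (exprn_gt0 _ Ep).
by exists N => m n hm hn; apply: hnorm_lt_of_n2 => //; apply: hN.
Qed.

End IP.


Lemma small_inv (R : realType) (eps : R) : 0 < eps ->
  exists N, forall k, (N <= k)%N -> (k.+1%:R)^-1 < eps.
Proof.
move=> ep; exists (Num.Def.archi_bound eps^-1) => k hk.
rewrite -[X in _ < X](invrK eps) ltf_pV2 ?posrE ?invr_gt0 ?ltr0Sn //.
apply: (lt_le_trans (archi_boundP _)); first by rewrite invr_ge0 ltW.
by rewrite ler_nat; apply: (leq_trans hk).
Qed.

Lemma half_C (R : realType) : (((2^-1 : R)%:C)%C * (1 + 1) = 1 :> complex R).
Proof. by apply/eqP; rewrite eq_complex /=; apply/andP; split; apply/eqP; field. Qed.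

Section Riesz.
Variable R : realType.
Local Notation C := (complex R).
Local Notation Re := complex.Re.
Local Notation Im := complex.Im.
Variable V : lmodType C.
Variable ip : V -> V -> C.
Hypothesis hV : is_hilbert ip.

Lemma riesz (phi : V -> C) (K : R) :
  (forall a x y, phi (a *: x + y) = a * phi x + phi y) -> 0 <= K ->
  (forall x, sq (phi x) <= K * n2 ip x) -> exists k, forall u, phi u = ip u k.
Proof.
move=> hl hK hb.
have phiD x y : phi (x + y) = phi x + phi y by rewrite -[x]scale1r hl mul1r scale1r.
have phi0 : phi 0 = 0.
  have h := phiD 0 0; rewrite addr0 in h.
  by apply: (addrI (phi 0)); rewrite addr0 -h.
have phiZ a x : phi (a *: x) = a * phi x by rewrite -[a *: x]addr0 hl phi0 addr0.
have phiB x y : phi (x - y) = phi x - phi y by rewrite -scaleN1r phiD phiZ mulN1r.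
case: (pselect (exists u0, phi u0 != 0)) => [[u0 hu0]|hn]; last first.
  exists 0 => u; rewrite ip0r //; apply/eqP; apply/negPn/negP => h.
  by apply: hn; exists u.
pose x1 := (phi u0)^-1 *: u0.
have hx1 : phi x1 = 1 by rewrite phiZ mulVf.
pose E := [set r : R | exists x, phi x = 1 /\ r = n2 ip x].
have E0 : E !=set0 by exists (n2 ip x1); exists x1.
have Elb : has_lbound E by exists 0 => r [x [_ ->]]; exact: n2_ge0.
set d := inf E.
have hd x : phi x = 1 -> d <= n2 ip x.
  by move=> hx; apply: (ge_inf Elb); exists x.
have d0 : 0 <= d by apply: lb_le_inf => // r [x [_ ->]]; exact: n2_ge0.
have hadh n : exists x, phi x = 1 /\ n2 ip x < d + (n.+1%:R)^-1.
  have hp : 0 < (n.+1%:R : R)^-1 by rewrite invr_gt0 ltr0Sn.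
  have [r [x [hx ->]] hr] := @inf_adherent R E (n.+1%:R)^-1 hp (conj E0 Elb).
  by exists x.
case: (choice hadh) => xs hxs.
have hpar m n : n2 ip (xs m - xs n) <= 2 * (m.+1%:R)^-1 + 2 * (n.+1%:R)^-1.
  have h1 : phi (((2^-1 : R)%:C)%C *: (xs m + xs n)) = 1.
    by rewrite phiZ phiD (hxs m).1 (hxs n).1 half_C.
  have h2 := hd _ h1; rewrite n2Z // in h2.
  have e4 : sq (((2^-1 : R)%:C)%C : C) = 4^-1.
    by rewrite /sq /= expr0n /= addr0 exprVn expr2 -natrM.
  rewrite e4 in h2.
  have h3 : 4 * d <= n2 ip (xs m + xs n).
    have := ler_wpM2l (_ : (0:R) <= 4) h2; rewrite mulrA mulfV ?mul1r //; lra.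
  have h5 := n2B hV (xs m) (xs n); have h6 := n2D hV (xs m) (xs n).
  have h7 := (hxs m).2; have h8 := (hxs n).2; simpl in h7, h8.
  move: h3 h5 h6 h7 h8.
  move: (n2 ip (xs m + xs n)) (n2 ip (xs m - xs n)) (n2 ip (xs m)) (n2 ip (xs n)).
  move=> a b c e; move: (Re _) (m.+1%:R^-1) (n.+1%:R^-1) => X p q; lra.
have cauchy : seq_cauchy ip xs.
  apply: cauchyP => // eps ep.
  have [N hN] := small_inv (divr_gt0 ep (ltr0Sn _ 3)).
  exists N => m n hm hn.
  have e4 : eps / 4%:R * 4 = eps by field.
  have := hN _ hm; have := hN _ hn; have := hpar m n.
  move: (m.+1%:R^-1) (n.+1%:R^-1) (eps / 4%:R) e4 => p q f e4; lra.
have [x0 hx0] := ax5 hV cauchy.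
have hc := cvgP hV hx0.
have hphi0 : phi x0 = 1.
  have : sq (1 - phi x0) <= 0.
    apply: le0_eps => t tp.
    have K1 : 0 < K + 1 by lra.
    have [N hN] := hc (t / (K + 1)) (divr_gt0 tp K1).
    have h := hb (xs N - x0); rewrite phiB (hxs N).1 in h.
    have e : (K + 1) * (t / (K + 1)) = t by field; lra.
    have := hN N (leqnn N); have := n2_ge0 hV (xs N - x0).
    move: (n2 ip (xs N - x0)) (t / (K + 1)) e h => a s e h; nra.
  by move/sq_eq0/eqP; rewrite subr_eq0 => /eqP <-.
have hle : forall eps, 0 < eps -> eps <= 1 -> n2 ip x0 <= d + eps * (d + 5).
  move=> eps ep e1.
  have [N1 h1] := hc (eps ^+ 2) (exprn_gt0 _ ep).
  have [N2 h2] := small_inv ep.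
  pose n := maxn N1 N2.
  have hn1 := h1 n (leq_maxl _ _); have hn2 := h2 n (leq_maxr _ _).
  have ha := (hxs n).2.
  have ex0 : x0 = xs n + (x0 - xs n) by rewrite addrC subrK.
  have hw := weighted hV (xs n) (x0 - xs n) ep.
  have hnb : n2 ip (x0 - xs n) = n2 ip (xs n - x0) by rewrite -n2N // opprB.
  rewrite ex0 n2D //; rewrite hnb in hw *.
  have A0 := n2_ge0 hV (xs n); have B0 := n2_ge0 hV (xs n - x0).
  move: (n2 ip (xs n)) (n2 ip (xs n - x0)) (Re (ip (xs n) (x0 - xs n))) ha hn1 hw A0 B0.
  move=> A B X ha hB hw A0 B0.
  have hA : A < d + eps by move: hn2 ha; move: (n.+1%:R^-1) => p; lra.
  have hB' : B <= eps ^+ 2 by lra.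
  have h3 : eps * A <= eps * (d + eps) by rewrite ler_pM2l //; lra.
  have h4 : eps ^+ 2 * A <= eps ^+ 2 * (d + eps) by rewrite ler_pM2l ?exprn_gt0 //; lra.
  have h5 : eps * B <= eps * eps ^+ 2 by rewrite ler_pM2l //.
  have h6 : eps * (A + 2 * X + B) <= eps * (d + eps * (d + 5)).
    have h7 : eps ^+ 3 <= eps ^+ 2.
      by rewrite exprS [X in _ <= X]expr2 -[X in _ <= X]mul1r ler_pM2r ?exprn_gt0 // -expr2 exprn_gt0.
    rewrite !mulrDr; move: h3 h4 h5 h7 hw; rewrite !exprS !expr0 !mulr1.
    move=> h3 h4 h5 h7 hw; nra.
  by rewrite ler_pM2l // in h6.
have hmin : n2 ip x0 <= d.
  rewrite leNgt; apply/negP => hlt.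
  set del := n2 ip x0 - d.
  have delp : 0 < del by rewrite /del subr_gt0.
  set eps := del / (del + 2 * (d + 5)).
  have den : 0 < del + 2 * (d + 5) by lra.
  have ep : 0 < eps by rewrite /eps divr_gt0.
  have ee : eps * (del + 2 * (d + 5)) = del by rewrite /eps; field; lra.
  have e1 : eps <= 1.
    rewrite /eps ler_pdivrMr // mul1r; lra.
  have := hle eps ep e1; move: ee delp ep e1; clearbody eps; rewrite /del => ee delp ep e1.
  nra.
have horth z : phi z = 0 -> ip x0 z = 0.
  move=> hz; set beta := ip x0 z.
  set t := (n2 ip z + 1)^-1.
  have nz0 := n2_ge0 hV z.
  have tp : 0 < t by rewrite /t invr_gt0; lra.
  have h1 : phi (x0 + (- ((t%:C)%C * beta)) *: z) = 1 by rewrite phiD phiZ hz mulr0 addr0.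
  have := hd _ h1; rewrite n2_expand // Re_negtz sq_negtz.
  have e : t ^+ 2 * sq beta * n2 ip z = t * sq beta - t ^+ 2 * sq beta.
    by rewrite /t; field; lra.
  rewrite e => h.
  have hs : sq beta <= 0.
    have := sq_ge0 beta; move: h hmin; move: (sq beta) => S.
    rewrite expr2; nra.
  exact: sq_eq0.
have x0n : n2 ip x0 != 0.
  apply/negP => /eqP h; move: hphi0; rewrite (n2_eq0 hV h) phi0 => /eqP.
  by rewrite eq_sym oner_eq0.
exists (((n2 ip x0)^-1)%:C%C *: x0) => u.
have hz : phi (u - phi u *: x0) = 0 by rewrite phiB phiZ hphi0 mulr1 subrr.
have := horth _ hz; rewrite ipBr // ipZr // (ip_real hV x0) => /eqP; rewrite subr_eq0 => /eqP h.
rewrite ipZr // (ipC hV) h.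
move: (phi u) => w; case: w => w1 w2.
by apply/eqP; rewrite eq_complex /=; apply/andP; split; apply/eqP; field.
Qed.

End Riesz.


Section Ops.
Variable R : realType.
Local Notation C := (complex R).
Local Notation Re := complex.Re.

Definition lin (V W : lmodType C) (A : op V W) :=
  forall a x y x' y', A (x, y) -> A (x', y') -> A (a *: x + x', a *: y + y').

Section Lin.
Variables V W : lmodType C.
Variable A : op V W.
Hypothesis hA : lin A.

Lemma lin0 x y : A (x, y) -> A (0, 0).
Proof. by move=> h; have := hA (-1) h h; rewrite !scaleN1r !addNr. Qed.

Lemma linN x y : A (x, y) -> A (- x, - y).
Proof. by move=> h; have := hA (-1) h (lin0 h); rewrite !scaleN1r !addr0. Qed.

Lemma linD x y x' y' : A (x, y) -> A (x', y') -> A (x + x', y + y').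
Proof. by move=> h h'; have := hA 1 h h'; rewrite !scale1r. Qed.

Lemma linB x y x' y' : A (x, y) -> A (x', y') -> A (x - x', y - y').
Proof. by move=> h h'; apply: linD h (linN h'). Qed.

Lemma linZ a x y : A (x, y) -> A (a *: x, a *: y).
Proof. by move=> h; have := hA a h (lin0 h); rewrite !addr0. Qed.

End Lin.

Lemma is_op_lin (V W : lmodType C) (A : op V W) : is_op A -> lin A.
Proof. by move=> h; destruct h. Qed.

Lemma is_op_sv (V W : lmodType C) (A : op V W) x y y' :
  is_op A -> A (x, y) -> A (x, y') -> y = y'.
Proof.
move=> hop h h'; destruct hop as [_ hl h0]; have := linB hl h' h; rewrite subrr => /h0 /eqP.
by rewrite subr_eq0 => /eqP.
Qed.

Section LinOn.
Variables V W : lmodType C.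
Variable D : set V.
Variable f : V -> W.
Hypothesis hf : linear_on D f.

Lemma lo_D x y : D x -> D y -> f (x + y) = f x + f y.
Proof. by move=> hx hy; have := hf 1 hx hy; rewrite !scale1r. Qed.

Lemma lo_0 x : D x -> D 0 -> f 0 = 0.
Proof.
move=> _ h0; have h := lo_D h0 h0; rewrite addr0 in h.
by apply: (addrI (f 0)); rewrite addr0 -h.
Qed.

Lemma lo_B x y : D x -> D y -> D 0 -> f (x - y) = f x - f y.
Proof.
move=> hx hy h0; have := hf (-1) hy hx; rewrite !scaleN1r => h.
by rewrite addrC h addrC.
Qed.

Lemma lo_Z a x : D x -> D 0 -> f (a *: x) = a *: f x.
Proof. by move=> hx h0; rewrite -[a *: x]addr0 hf // (lo_0 hx h0) addr0. Qed.

End LinOn.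

Lemma dom_lin (V W : lmodType C) (A : op V W) a x x' :
  lin A -> dom A x -> dom A x' -> dom A (a *: x + x').
Proof. by move=> hA [y hy] [y' hy']; exists (a *: y + y'); apply: hA. Qed.

Lemma shift_lin (V : lmodType C) (A : op V V) (l : C) : lin A -> lin (opshift A l).
Proof.
move=> hA a x u x' u' [w [hw /= ->]] [w' [hw' /= ->]].
exists (a *: w + w'); split; first exact: hA.
by rewrite /= !scalerDr !scalerN !scalerA opprD addrACA [l * a]mulrC.
Qed.

Lemma shift_uniq (V : lmodType C) (A : op V V) (l : C) x x' u :
  lin A -> (forall x, opshift A l (x, 0) -> x = 0) ->
  opshift A l (x, u) -> opshift A l (x', u) -> x = x'.
Proof.
move=> hA h0 h h'; have hs : lin (opshift A l) by apply: shift_lin.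
have := linB hs h h'; rewrite subrr => /h0 /eqP.
by rewrite subr_eq0 => /eqP.
Qed.

End Ops.


Section Surj.
Variable R : realType.
Local Notation C := (complex R).
Local Notation Re := complex.Re.
Variable V : lmodType C.
Variable ip : V -> V -> C.
Hypothesis hV : is_hilbert ip.

Lemma adj_surj (A : op V V) (l : C) : lin A -> resolvent ip A l ->
  forall y, exists k, adjoint ip ip A (k, y + l^* *: k).
Proof.
move=> hA [hinj hsurj [c [c0 hc]]] y.
have [Rf hRf] := choice hsurj.
have huniq x u : opshift A l (x, u) -> x = Rf u.
  by move=> h; apply: (shift_uniq hA hinj h (hRf u)).
have hs : lin (opshift A l) by apply: shift_lin.
have hRlin a u v : Rf (a *: u + v) = a *: Rf u + Rf v.
  by apply/esym/huniq; apply: hs; apply: hRf.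
have hcR : c = ((Re c)%:C)%C.
  by apply/esym/RRe_real; apply: ger0_real.
have hbnd u : n2 ip (Rf u) <= (Re c) ^+ 2 * n2 ip u.
  have h := hc _ _ (hRf u).
  have : hnorm ip (Rf u) ^+ 2 <= (c * hnorm ip u) ^+ 2.
    apply: lerXn2r => //; rewrite qualifE /=; first exact: hnorm_ge0.
    by apply: mulr_ge0 => //; exact: hnorm_ge0.
  by rewrite exprMn !hnorm_sq // hcR -rmorphXn -rmorphM /= lecR.
pose phi u := ip (Rf u) y.
have hphi : forall a x z, phi (a *: x + z) = a * phi x + phi z.
  by move=> a x z; rewrite /phi hRlin ax1.
have hK : 0 <= (Re c) ^+ 2 * n2 ip y by rewrite mulr_ge0 ?sqr_ge0 ?n2_ge0.
have hphib x : sq (phi x) <= ((Re c) ^+ 2 * n2 ip y) * n2 ip x.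
  apply: (le_trans (cauchy_schwarz hV _ _)).
  have := hbnd x; have := n2_ge0 hV y; have := n2_ge0 hV x.
  move: (n2 ip (Rf x)) (n2 ip y) (n2 ip x) (Re c ^+ 2) => a b d e; nra.
have [k hk] := riesz hV hphi hK hphib.
exists k => x w hxw /=.
pose u := w - l *: x.
have hu : opshift A l (x, u) by exists w.
have hx := huniq _ _ hu.
have -> : w = u + l *: x by rewrite /u subrK.
by rewrite (ipDl hV) (ipZl hV) -hk /phi -hx (ipDr hV) (ipZr hV) conjCK.
Qed.

End Surj.

Section Dense.
Variable R : realType.
Local Notation C := (complex R).
Local Notation Re := complex.Re.
Variables H G : lmodType C.
Variable ipG : G -> G -> C.
Hypothesis hG : is_hilbert ipG.

Lemma dense_orth (T : op H H) (Gam0 : H -> G) (l : C) :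
  is_op T -> linear_on (dom T) Gam0 ->
  dense_in ipG [set Gam0 f | f in dom T] ->
  (forall y, exists k, A0op T Gam0 (k, y + l *: k)) ->
  forall psi, (forall h, eigker T l h -> ipG (Gam0 h) psi = 0) -> psi = 0.
Proof.
move=> hT hlo hd hs psi hpsi.
have hTl := is_op_lin hT.
have dom0 : dom T 0 by exists 0; case: hT.
have orth g : dom T g -> ipG (Gam0 g) psi = 0.
  case=> w hw.
  have [k [hk hk0]] := hs (w - l *: g); rewrite /= in hk hk0.
  have hh := linB hTl hw hk.
  have e : w - (w - l *: g + l *: k) = l *: (g - k).
    by rewrite opprD addrA subKr scalerBr.
  rewrite e in hh.
  have dg : dom T g by exists w.
  have dk : dom T k by exists (w - l *: g + l *: k).
  by have := hpsi _ hh; rewrite (lo_B hlo dg dk dom0) hk0 subr0.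
apply: (n2_le0 hG); apply: le0_eps => t tp.
have e0 : 0 < ((Num.sqrt t)%:C)%C :> C by rewrite ltcR sqrtr_gt0.
have [d [g hg <-] hn] := hd psi _ e0.
have := n2_lt_of_hnorm hG e0 hn; rewrite /= sqr_sqrtr ?(ltW tp) // n2B //.
rewrite (ipC hG) (orth _ hg) /=.
have := n2_ge0 hG (Gam0 g); lra.
Qed.

End Dense.


Section Part.
Variable R : realType.
Local Notation C := (complex R).
Variables H G : lmodType C.
Variable ipH : H -> H -> C.
Variable T : op H H.
Variables Gam0 Gam1 : H -> G.
Variables B1 B2 : op G G.
Variable l : C.
Variable gts : op H G.
Hypothesis hT : is_op T.
Hypothesis hlo0 : linear_on (dom T) Gam0.
Hypothesis hlo1 : linear_on (dom T) Gam1.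
Hypothesis hB1 : is_op B1.
Hypothesis hB2 : is_op B2.
Hypothesis hl : resolvent ipH (A0op T Gam0) l.
Hypothesis P1 : forall f k, opshift (A0op T Gam0) l (k, f) -> gts (f, Gam1 k).
Hypothesis P2 : forall f p p', gts (f, p) -> gts (f, p') -> p = p'.

Local Notation A0 := (A0op T Gam0).

Lemma hTl : lin T. Proof. exact: is_op_lin. Qed.
Lemma dom0 : dom T 0. Proof. by exists 0; destruct hT. Qed.

Lemma linA0 : lin A0.
Proof.
move=> a x y x' y' [h1 e1] [h2 e2]; split; first exact: hTl.
rewrite /= hlo0 /= ?e1 ?e2 ?scaler0 ?addr0 //; [by exists y | by exists y'].
Qed.

Lemma injA0 x : opshift A0 l (x, 0) -> x = 0.
Proof. by destruct hl as [h _ _]; apply: h. Qed.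

Lemma surjA0 f : exists k, opshift A0 l (k, f).
Proof. by destruct hl as [_ h _]; apply: h. Qed.

Lemma uniqA0 x x' u : opshift A0 l (x, u) -> opshift A0 l (x', u) -> x = x'.
Proof. exact: shift_uniq linA0 injA0. Qed.

Lemma gam_sv a h1 h2 : gammaf T Gam0 l (a, h1) -> gammaf T Gam0 l (a, h2) -> h1 = h2.
Proof.
move=> [/= t1 e1] [/= t2 e2].
have {}t1 : T (h1, l *: h1) := t1.
have {}t2 : T (h2, l *: h2) := t2.
have d1 : dom T h1 by exists (l *: h1).
have d2 : dom T h2 by exists (l *: h2).
have : opshift A0 l (h1 - h2, 0).
  exists (l *: (h1 - h2)); split; last by rewrite /= subrr.
  split; first by rewrite /= scalerBr; exact: (linB hTl t1 t2).
  by rewrite /= (lo_B hlo0 d1 d2 dom0) -e1 -e2 subrr.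
by move/injA0/eqP; rewrite subr_eq0 => /eqP.
Qed.

Local Notation Ab := (ABop T Gam0 Gam1 B1 B2).
Local Notation gam := (gammaf T Gam0 l).
Local Notation Mw := (weylf T Gam0 Gam1 l).
Local Notation IBMB := (opsub opid (opmul B2 (opmul Mw B1))).

Lemma linAb : lin Ab.
Proof.
move=> a x y x' y' [t1 [w1 [b21 b11]]] [t2 [w2 [b22 b12]]]; split; first exact: hTl.
have d1 : dom T x by exists y.
have d2 : dom T x' by exists y'.
exists (a *: w1 + w2); split.
- by rewrite /= hlo1 //; apply: (is_op_lin hB2).
- by rewrite /= hlo0 //; apply: (is_op_lin hB1).
Qed.

Section WithPS.
Hypothesis hps : ~ point_spec Ab l.

Lemma injAb x : opshift Ab l (x, 0) -> x = 0.
Proof.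
move=> [y [hA /= e]].
have ey : y = l *: x by move/eqP: e; rewrite eq_sym subr_eq0 => /eqP.
case: (eqVneq x 0) => // hx; exfalso; apply: hps.
by exists x; [exact/eqP | rewrite -ey].
Qed.

Lemma injIBMB e1 e2 c : IBMB (e1, c) -> IBMB (e2, c) -> e1 = e2.
Proof.
move=> [y1 [z1 [/= ey1 hX1 ec1]]] [y2 [z2 [/= ey2 hX2 ec2]]].
move: hX1 => [u1 [[a1 [hb1 [h1 [[t1 ea1] [dh1 eu1]]]]] hb21]].
move: hX2 => [u2 [[a2 [hb2 [h2 [[t2 ea2] [dh2 eu2]]]]] hb22]].
have {}ey1 : y1 = e1 := ey1. have {}ey2 : y2 = e2 := ey2.
have {}ec1 : c = y1 - z1 := ec1. have {}ec2 : c = y2 - z2 := ec2.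
have {}ea1 : a1 = Gam0 h1 := ea1. have {}ea2 : a2 = Gam0 h2 := ea2.
have {}eu1 : u1 = Gam1 h1 := eu1. have {}eu2 : u2 = Gam1 h2 := eu2.
have {}t1 : T (h1, l *: h1) := t1.
have {}t2 : T (h2, l *: h2) := t2.
have T12 : T (h1 - h2, l *: (h1 - h2)) by rewrite scalerBr; exact: (linB hTl t1 t2).
have hb12 := linB (is_op_lin hB1) hb1 hb2.
have hb212 := linB (is_op_lin hB2) hb21 hb22.
have ez : z1 - z2 = e1 - e2.
  have -> : z1 = e1 - c by rewrite ec1 -ey1 subKr.
  have -> : z2 = e2 - c by rewrite ec2 -ey2 subKr.
  by rewrite opprB addrA subrK.
have eG1 : Gam1 (h1 - h2) = u1 - u2 by rewrite (lo_B hlo1 dh1 dh2 dom0) -eu1 -eu2.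
have eG0 : Gam0 (h1 - h2) = a1 - a2 by rewrite (lo_B hlo0 dh1 dh2 dom0) -ea1 -ea2.
have hA : Ab (h1 - h2, l *: (h1 - h2)).
  split => //; exists (e1 - e2); split; rewrite /=.
  - by rewrite eG1 -ez.
  - by rewrite eG0.
have : opshift Ab l (h1 - h2, 0) by exists (l *: (h1 - h2)); split => //; rewrite /= subrr.
move/injAb => h0.
have : B2 (0, e1 - e2).
  have <- : Gam1 (h1 - h2) = 0 by rewrite h0 (lo_0 hlo1 dom0 dom0).
  by rewrite eG1 -ez.
move=> hB; destruct hB2 as [_ _ hz]; move: (hz _ hB) => /eqP.
by rewrite subr_eq0 => /eqP.
Qed.

End WithPS.

Lemma part_main :
  let A := ABop T Gam0 Gam1 B1 B2 in
  let gam := gammaf T Gam0 l in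
  let Mw := weylf T Gam0 Gam1 l in
  let IBMB := opsub opid (opmul B2 (opmul Mw B1)) in
  let Rop := opadd (opinv (opshift (A0op T Gam0) l))
                   (opmul gam (opmul B1 (opmul (opinv IBMB) (opmul B2 gts)))) in
  let cond := fun f => dom (opmul B2 gts) f /\
                       (forall psi, opmul B2 gts (f, psi) -> ran IBMB psi) in
  ~ point_spec A l ->
  (forall f, cond f ->
     ran (opshift A l) f /\
     exists h, [/\ opshift A l (h, f),
                   (forall h', opshift A l (h', f) -> h' = h) &
                   (forall h', Rop (f, h') <-> h' = h)]) /\
  ((forall f, cond f) ->
     (forall x x' y, opshift A l (x, y) -> opshift A l (x', y) -> x = x') /\
     (forall y, ran (opshift A l) y)).
Proof.
cbv zeta => hps.
have uniqA x x' y : opshift Ab l (x, y) -> opshift Ab l (x', y) -> x = x'.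
  by apply: shift_uniq; [exact: linAb | exact: injAb].
have claim : forall f, (dom (opmul B2 gts) f /\
                       (forall psi, opmul B2 gts (f, psi) -> ran IBMB psi)) ->
     ran (opshift Ab l) f /\
     exists h, [/\ opshift Ab l (h, f),
                   (forall h', opshift Ab l (h', f) -> h' = h) &
                   (forall h', opadd (opinv (opshift (A0op T Gam0) l))
                   (opmul gam (opmul B1 (opmul (opinv IBMB) (opmul B2 gts)))) (f, h') <-> h' = h)].
  move=> f [[chi [psi [hpsi hchi]]] hran].
  have [k hk] := surjA0 f.
  have hg0 := P1 hk.
  move: (hk) => [w [[tk gk] /= ef]].
  have {}tk : T (k, w) := tk. have {}gk : Gam0 k = 0 := gk.
  have {}ef : f = w - l *: k := ef.
  have epsi : psi = Gam1 k := P2 hpsi hg0.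
  rewrite epsi in hchi.
  have hchi' : opmul B2 gts (f, chi) by exists (Gam1 k).
  have [eta heta] := hran chi hchi'.
  move: (heta) => [y [z [/= ey hX ec]]].
  move: hX => [u [[a [hba [h0 [[t0 ea] [dh0 eu]]]]] hbz]].
  have {}ey : y = eta := ey. have {}ec : chi = y - z := ec.
  have {}ea : a = Gam0 h0 := ea. have {}eu : u = Gam1 h0 := eu.
  have {}t0 : T (h0, l *: h0) := t0.
  have dk : dom T k by exists w.
  have hAh : Ab (k + h0, w + l *: h0).
    split; first exact: (linD hTl tk t0).
    exists eta; split; rewrite /=.
    - rewrite (lo_D hlo1 dk dh0) -eu.
      have -> : eta = chi + z by rewrite ec ey subrK.
      exact: (linD (is_op_lin hB2) hchi hbz).
    - by rewrite (lo_D hlo0 dk dh0) gk add0r -ea.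
  have hsh : opshift Ab l (k + h0, f).
    exists (w + l *: h0); split => //=.
    by rewrite ef scalerDr opprD addrACA subrr addr0.
  have hgam : gam (a, h0) by split.
  split; first by exists (k + h0).
  exists (k + h0); split => //.
  - by move=> h' hh'; apply: uniqA hh' hsh.
  move=> h'; split.
  - move=> [y' [z' [/= hy' hz' ->]]].
    have ey' : y' = k := uniqA0 hy' hk.
    move: hz' => [a' [[eta' [[chi' [[psi' [hpsi' hb2']] hI']] hb1']] hg']].
    simpl in *.
    have epsi' : psi' = Gam1 k := P2 hpsi' hg0.
    rewrite epsi' in hb2'.
    have echi : chi' = chi := is_op_sv hB2 hb2' hchi.
    rewrite echi in hI'.
    have eeta : eta' = eta := injIBMB hps hI' heta.
    rewrite eeta in hb1'.
    have ea' : a' = a := is_op_sv hB1 hb1' hba.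
    rewrite ea' in hg'.
    have ez' : z' = h0 := gam_sv hg' hgam.
    by rewrite ey' ez'.
  - move=> ->; exists k, h0; split => //.
    exists a; split => //.
    exists eta; split => //.
    exists chi; split => //.
split; first exact: claim.
move=> hall; split; first exact: uniqA.
by move=> y; case: (claim y (hall y)).
Qed.

End Part.

Unset Implicit Arguments. Set Strict Implicit.



Lemma P1_i (R : realType) (H G : lmodType (complex R))
  (ipH : H -> H -> complex R) (ipG : G -> G -> complex R)
  (hH : is_hilbert ipH) (hG : is_hilbert ipG)
  (T Tt : op H H) (Gam0 Gam1 Gam0t Gam1t : H -> G) (l : complex R)
  (green : forall f Tf g Ttg, T (f, Tf) -> Tt (g, Ttg) ->
     ipH Tf g - ipH f Ttg = ipG (Gam1 f) (Gam0t g) - ipG (Gam0 f) (Gam1t g)) :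
  forall f k, opshift (A0op T Gam0) l (k, f) ->
    adjoint ipG ipH (gammaf Tt Gam0t (l^*)%C) (f, Gam1 k).
Proof.
move=> f k [w [[tk gk] ef]] phi h [th eph].
have {}tk : T (k, w) := tk. have {}gk : Gam0 k = 0 := gk.
have {}ef : f = w - l *: k := ef.
have {}th : Tt (h, (l^*)%C *: h) := th. have {}eph : phi = Gam0t h := eph.
rewrite /= eph.
have e := green _ _ _ _ tk th.
rewrite gk (ip0l hG) subr0 (ipZr hH) in e.
rewrite (ipC hH) (ipC hG (Gam1 k)) -e ef (ipBl hH) (ipZl hH).
by rewrite conjCK.
Qed.

Lemma P1_ii (R : realType) (H G : lmodType (complex R))
  (ipH : H -> H -> complex R) (ipG : G -> G -> complex R)
  (hH : is_hilbert ipH) (hG : is_hilbert ipG)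
  (T Tt : op H H) (Gam0 Gam1 Gam0t Gam1t : H -> G) (mu : complex R)
  (green : forall f Tf g Ttg, T (f, Tf) -> Tt (g, Ttg) ->
     ipH Tf g - ipH f Ttg = ipG (Gam1 f) (Gam0t g) - ipG (Gam0 f) (Gam1t g)) :
  forall g k, opshift (A0op Tt Gam0t) mu (k, g) ->
    adjoint ipG ipH (gammaf T Gam0 (mu^*)%C) (g, Gam1t k).
Proof.
move=> g k [w [[tk gk] eg]] phi h [th eph].
have {}tk : Tt (k, w) := tk. have {}gk : Gam0t k = 0 := gk.
have {}eg : g = w - mu *: k := eg.
have {}th : T (h, (mu^*)%C *: h) := th. have {}eph : phi = Gam0 h := eph.
rewrite /= eph.
have e := green _ _ _ _ th tk.
rewrite gk (ip0r hG) sub0r (ipZl hH) in e.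
rewrite eg (ipBr hH) (ipZr hH).
rewrite -[RHS]opprK -e opprB.
by [].
Qed.

Lemma P2_gen (R : realType) (H G : lmodType (complex R))
  (ipH : H -> H -> complex R) (ipG : G -> G -> complex R)
  (hG : is_hilbert ipG)
  (T : op H H) (Gam0 : H -> G) (l : complex R) :
  is_op T -> linear_on (dom T) Gam0 ->
  dense_in ipG [set Gam0 f | f in dom T] ->
  (forall y, exists k, A0op T Gam0 (k, y + l *: k)) ->
  forall f p p', adjoint ipG ipH (gammaf T Gam0 l) (f, p) ->
    adjoint ipG ipH (gammaf T Gam0 l) (f, p') -> p = p'.
Proof.
move=> hT hlo hd hs f p p' hp hp'.
suff : p - p' = 0 by move/eqP; rewrite subr_eq0 => /eqP.
apply: (dense_orth hG hT hlo hd hs) => h hh.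
have hg : gammaf T Gam0 l (Gam0 h, h) by split.
have e1 := hp _ _ hg; have e2 := hp' _ _ hg; simpl in e1, e2.
by rewrite (ipBr hG) -e1 -e2 subrr.
Qed.

Theorem theorem4p4 (R : realType)
  (H G : lmodType (complex R))
  (ipH : H -> H -> complex R) (ipG : G -> G -> complex R)
  (hH : is_hilbert ipH) (hHsep : separable ipH) (hG : is_hilbert ipG)
  (S St T Tt : op H H) (Gam0 Gam1 Gam0t Gam1t : H -> G)
  (hS : adjoint_pair ipH S St)
  (htriple : is_triple ipH ipG S St T Tt Gam0 Gam1 Gam0t Gam1t)
  (hrho : exists l0, resolvent ipH (A0op T Gam0) l0)
  (B1 B2 Bt1 Bt2 : op G G)
  (hB1 : is_op B1) (hB2 : is_op B2) (hBt1 : is_op Bt1) (hBt2 : is_op Bt2)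
  (l mu : complex R)
  (hl : resolvent ipH (A0op T Gam0) l)
  (hmu : resolvent ipH (A0op Tt Gam0t) mu) :
  (* part (i) *)
  (let A := ABop T Gam0 Gam1 B1 B2 in
   let gam := gammaf T Gam0 l in
   let Mw := weylf T Gam0 Gam1 l in
   let gts := adjoint ipG ipH (gammaf Tt Gam0t (l^*)%C) in
   let IBMB := opsub opid (opmul B2 (opmul Mw B1)) in
   let Rop := opadd (opinv (opshift (A0op T Gam0) l))
                    (opmul gam (opmul B1 (opmul (opinv IBMB) (opmul B2 gts)))) in
   let cond := fun f => dom (opmul B2 gts) f /\
                        (forall psi, opmul B2 gts (f, psi) -> ran IBMB psi) in
   ~ point_spec A l ->
   (forall f, cond f ->
      ran (opshift A l) f /\
      exists h, [/\ opshift A l (h, f),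
                    (forall h', opshift A l (h', f) -> h' = h) &
                    (forall h', Rop (f, h') <-> h' = h)]) /\
   ((forall f, cond f) ->
      (forall x x' y, opshift A l (x, y) -> opshift A l (x', y) -> x = x') /\
      (forall y, ran (opshift A l) y)))
  /\
  (* part (ii) *)
  (let At := ABop Tt Gam0t Gam1t Bt1 Bt2 in
   let gamt := gammaf Tt Gam0t mu in
   let Mwt := weylf Tt Gam0t Gam1t mu in
   let gs := adjoint ipG ipH (gammaf T Gam0 (mu^*)%C) in
   let IBMBt := opsub opid (opmul Bt2 (opmul Mwt Bt1)) in
   let Ropt := opadd (opinv (opshift (A0op Tt Gam0t) mu))
                 (opmul gamt (opmul Bt1 (opmul (opinv IBMBt) (opmul Bt2 gs)))) in
   let condt := fun g => dom (opmul Bt2 gs) g /\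
                         (forall psi, opmul Bt2 gs (g, psi) -> ran IBMBt psi) in
   ~ point_spec At mu ->
   (forall g, condt g ->
      ran (opshift At mu) g /\
      exists h, [/\ opshift At mu (h, g),
                    (forall h', opshift At mu (h', g) -> h' = h) &
                    (forall h', Ropt (g, h') <-> h' = h)]) /\
   ((forall g, condt g) ->
      (forall x x' y, opshift At mu (x, y) -> opshift At mu (x', y) -> x = x') /\
      (forall y, ran (opshift At mu) y))).
Proof.
have [hT [hTt [_ [_ [_ [_ [hlo0 [hlo1 [hlo0t [hlo1t [green [hd0 [hd0t [M1 M2]]]]]]]]]]]]]]
  := htriple.
split.
- move=> A gam Mw gts IBMB Rop cond.
  have hs : forall y, exists k, A0op Tt Gam0t (k, y + (l^*)%C *: k).
    move=> y; have [k hk] := adj_surj hH (linA0 hT hlo0) hl y.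
    by exists k; rewrite -M1.
  exact (part_main hT hlo0 hlo1 hB1 hB2 hl (@P1_i _ _ _ _ _ hH hG _ _ _ _ _ _ _ green)
                    (@P2_gen _ _ _ _ _ hG _ _ _ hTt hlo0t hd0t hs)).
- move=> A gam Mw gts IBMB Rop cond.
  have hs : forall y, exists k, A0op T Gam0 (k, y + (mu^*)%C *: k).
    move=> y; have [k hk] := adj_surj hH (linA0 hTt hlo0t) hmu y.
    by exists k; rewrite -M2.
  exact (part_main hTt hlo0t hlo1t hBt1 hBt2 hmu (@P1_ii _ _ _ _ _ hH hG _ _ _ _ _ _ _ green)
                    (@P2_gen _ _ _ _ _ hG _ _ _ hT hlo0 hd0 hs)).
Qed.
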